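(* Let $f:A\to B$ be a homomorphism of abelian groups and let $\kappa$ be an infinite regular cardinal greater than the minimal number of generators of $A$. If $D$ is $L_f$-local, then $D^{\kappa}_{<\kappa}$ is $L_f$-local.
   Context: All groups are abelian. A homomorphism $f:X\to Y$ is orthogonal to a group $B$ if composition with $f$ induces a bijection $\mathop{\rm Hom}(Y,B)\to\mathop{\rm Hom}(X,B)$. For a homomorphism $f$, the $f$-localization $L_f$ is the localization functor whose local groups are exactly the groups $D$ to which $f$ is orthogonal ($L_f$-local means $f$ is orthogonal to $D$). For cardinals $\kappa\geq\lambda$ with $\lambda$ infinite, $D^\kappa_{<\lambda}$ denotes the subgroup of $\prod_\kappa D$ consisting of those elements whose support has cardinality less than $\lambda$. *)

(* Defs.v *)
(* Abelian groups are zmodType's; cardinals are represented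
   by types, compared via injections. *)
From HB Require Import structures.
From mathcomp Require Import all_boot all_order all_algebra.
Set Implicit Arguments. Unset Strict Implicit. Unset Printing Implicit Defensive.
Import GRing.Theory.
Local Open Scope ring_scope.

Definition card_le (X Y : Type) : Prop := exists h : X -> Y, injective h.
Definition card_lt (X Y : Type) : Prop := card_le X Y /\ ~ card_le Y X.

Definition infinite_card (K : Type) : Prop := card_le nat K.

Definition regular_card (K : Type) : Prop :=
  infinite_card K /\
  forall (I : Type) (S : I -> K -> Prop),
    card_lt I K ->
    (forall i, card_lt {k : K | S i k} K) ->
    card_lt {k : K | exists i, S i k} K.

Definition is_hom (X Y : zmodType) (h : X -> Y) : Prop :=
  forall x y, h (x - y) = h x - h y.

Definition generates (A : zmodType) (G : Type) (g : G -> A) : Prop :=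
  forall P : A -> Prop, P 0 -> (forall x y, P x -> P y -> P (x - y)) ->
    (forall i, P (g i)) -> forall a, P a.

Definition gen_num_lt (A : zmodType) (K : Type) : Prop :=
  exists (G : Type) (g : G -> A), generates g /\ card_lt G K.

(* f : A -> B is orthogonal to D: precomposition with f is a bijection
   Hom(B,D) -> Hom(A,D) (injective and surjective). *)
Definition orthogonal (A B : zmodType) (f : A -> B) (D : zmodType) : Prop :=
  (forall h1 h2 : B -> D, is_hom h1 -> is_hom h2 ->
     (forall a, h1 (f a) = h2 (f a)) -> forall b, h1 b = h2 b) /\
  (forall g : A -> D, is_hom g ->
     exists h : B -> D, is_hom h /\ forall a, h (f a) = g a).

Definition Lf_local (A B : zmodType) (f : A -> B) (D : zmodType) : Prop :=
  orthogonal f D.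

(* element x of prod_K D lies in D^K_{<K}: its support has cardinality < |K| *)
Definition small_support (K : Type) (D : zmodType) (x : K -> D) : Prop :=
  card_lt {k : K | x k != 0} K.

(* homomorphisms X -> D^K_{<K}: maps into prod_K D, additive (coordinatewise
   group operations), with values in D^K_{<K} *)
Definition is_hom_small (K : Type) (X D : zmodType) (h : X -> K -> D) : Prop :=
  (forall x y k, h (x - y) k = h x k - h y k) /\
  (forall x, small_support (h x)).

(* f is orthogonal to the group D^K_{<K}; elements of D^K_{<K} are equal iff
   they agree at each coordinate. *)
Definition Lf_local_small (A B : zmodType) (f : A -> B) (K : Type) (D : zmodType)
  : Prop :=
  (forall h1 h2 : B -> K -> D, is_hom_small h1 -> is_hom_small h2 ->
     (forall a k, h1 (f a) k = h2 (f a) k) -> forall b k, h1 b k = h2 b k) /\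
  (forall g : A -> K -> D, is_hom_small g ->
     exists h : B -> K -> D, is_hom_small h /\ forall a k, h (f a) k = g a k).

(* Main.v *)
Require Import Defs.
From mathcomp Require Import all_boot all_order all_algebra.
From Stdlib Require Import IndefiniteDescription Classical.
Import GRing.Theory.
Local Open Scope ring_scope.

Theorem lemma3 (A B : zmodType) (f : A -> B) (K : Type) (D : zmodType) :
  is_hom f -> regular_card K -> gen_num_lt A K ->
  Lf_local f D -> Lf_local_small f K D.
Proof.
move=> _ [_ Hreg] [G [gi [Hgen HG]]] [Hu He].
split.
  move=> h1 h2 [a1 s1] [a2 s2] E b k.
  have H1 : is_hom (fun b => h1 b k) by move=> x y; rewrite a1.
  have H2 : is_hom (fun b => h2 b k) by move=> x y; rewrite a2.
  exact: (Hu (fun b => h1 b k) (fun b => h2 b k) H1 H2 (fun a => E a k)).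
move=> g [ga gs].
have Hex : forall k, exists h : B -> D, is_hom h /\ forall a, h (f a) = g a k.
  by move=> k; apply: He => x y; rewrite ga.
pose hk k := proj1_sig (constructive_indefinite_description _ (Hex k)).
have hkP k : is_hom (hk k) /\ forall a, hk k (f a) = g a k.
  exact: proj2_sig (constructive_indefinite_description _ (Hex k)).
pose S := fun i k => g (gi i) k != 0.
have HS := Hreg G S HG (fun i => gs (gi i)).
have zero k : ~ (exists i, S i k) -> forall b, hk k b = 0.
  move=> nS.
  have g0 : forall a, g a k = 0.
    apply: Hgen.
    - by rewrite -(subrr (0:A)) ga subrr.
    - by move=> x y Hx Hy; rewrite ga Hx Hy subrr.
    - move=> i; apply/eqP; apply: negbNE; apply/negP => Hi; apply: nS; by exists i.
  have [hh hf] := hkP k.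
  apply: (Hu (hk k) (fun _ => 0)) => //.
  - by move=> x y; rewrite subrr.
  - by move=> a; rewrite hf g0.
exists (fun b k => hk k b); split; last by move=> a k; case: (hkP k).
split; first by move=> x y k; case: (hkP k) => hh _; rewrite hh.
move=> b.
have inc : forall k, hk k b != 0 -> exists i, S i k.
  move=> k nz; apply: NNPP => nS; move: nz; by rewrite zero // eqxx.
case: HS => [[e einj] Hn]; split.
  exists (fun x => proj1_sig x) => x y E; apply: val_inj; exact: E.
move=> [j jinj]; apply: Hn.
exists (fun k => exist _ (proj1_sig (j k)) (inc _ (proj2_sig (j k)))).
move=> x y E; apply: jinj; apply: val_inj.
by move: (f_equal (@proj1_sig _ _) E).
Qed.
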